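(* Let $(X,d,m)$ be $D$-Ahlfors regular, fix $o\in X$ and set $d(x)=1+d(o,x)$. For every $a\in(0,1]$ there exists $C_a\in(0,\infty)$ such that, for every $t\in(0,1/2]$ and every nonnegative $g\in L^1_{\mathrm{loc}}(X)$, there is a finite collection $\{x_j\}_j$ of points of $X$ such that: $t\,d(x_j)\le1$ for all $j$; $\sum_j\mathbf 1_{B(x_j,td(x_j))}(x)\le C_a$ for all $x\in X$; $\sum_j\mathbf 1_{B(x_j,atd(x_j))}(x)\ge1$ whenever $t\,d(x)\le1/2$; and $g(x_j)\le C_a\,m(B(x_j,td(x_j)))^{-1}\int_{B(x_j,td(x_j))}g\,dm$ for all $j$.
   Context: $(X,d,m)$ is $D$-Ahlfors regular ($D>0$) if there is $A\ge1$ with $A^{-1}r^D\le m(B(x,r))\le Ar^D$ for all $x\in X$, $r\ge0$, where $B(x,r)$ is the metric ball. *)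

(* Defs.v *)
From HB Require Import structures.
From mathcomp Require Import all_boot all_order all_algebra.
From mathcomp Require Import all_classical all_reals all_analysis.
Set Implicit Arguments. Unset Strict Implicit. Unset Printing Implicit Defensive.
Import Order.TTheory GRing.Theory Num.Theory.
Local Open Scope classical_set_scope.
Local Open Scope ring_scope.

Definition mball {X : Type} {R : realType} (dist : X -> X -> R) (x : X) (r : R)
  : set X := [set y | dist x y < r].

Definition is_metric {X : Type} {R : realType} (dist : X -> X -> R) : Prop :=
  [/\ forall x y, 0 <= dist x y,
      forall x y, dist x y = 0 <-> x = y,
      forall x y, dist x y = dist y x &
      forall x y z, dist x z <= dist x y + dist y z].

Definition ahlfors_regular {d : measure_display} {X : measurableType d}
  {R : realType} (dist : X -> X -> R) (m : {measure set X -> \bar R}) (D : R)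
  : Prop :=
  exists A : R, 1 <= A /\
    forall (x : X) (r : R), 0 <= r ->
      ((A^-1 * r `^ D)%:E <= m (mball dist x r))%E /\
      (m (mball dist x r) <= (A * r `^ D)%:E)%E.

Definition loc_integrable {d : measure_display} {X : measurableType d}
  {R : realType} (dist : X -> X -> R) (m : {measure set X -> \bar R})
  (g : X -> R) : Prop :=
  measurable_fun setT g /\
  forall x : X, exists2 r : R, 0 < r &
    m.-integrable (mball dist x r) (fun y => (g y)%:E).

(* Main.v *)
Require Import Defs.
From HB Require Import structures.
From mathcomp Require Import all_boot all_order all_algebra.
From mathcomp Require Import all_classical all_reals all_analysis.
From mathcomp Require Import ring lra zify.
From mathcomp Require Import measurable_realfun.
Import Order.TTheory GRing.Theory Num.Theory.
Local Open Scope classical_set_scope.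
Local Open Scope ring_scope.

Section S.
Context (R : realType) (dsp : measure_display) (X : measurableType dsp)
  (m : {measure set X -> \bar R}).

Lemma exists_small (D : set X) (mD : measurable D) (f : X -> R) :
  measurable_fun D f -> (forall x, 0 <= f x) -> (0 < m D)%E -> (m D < +oo)%E ->
  forall i : R, (\int[m]_(x in D) (f x)%:E = i%:E)%E ->
  exists2 x, D x & f x * fine (m D) <= 2 * i.
Proof.
move=> mf f0 mD0 mDoo i Hi.
have [M mDM] : exists M : R, m D = M%:E.
  move: mD0 mDoo; case: (m D) => [r| |] //; by exists r.
rewrite mDM /=; move: mD0; rewrite mDM lte_fin => M0.
case: (pselect (exists2 x, D x & f x * M <= 2 * i)) => [//|H].
have H' : forall x, D x -> 2 * i < f x * M.
  move=> x Dx; rewrite ltNge; apply/negP => le; apply: H; by exists x.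
have i0 : 0 <= i.
  by rewrite -lee_fin -Hi; apply: integral_ge0 => x _; rewrite lee_fin.
have ile : 2 * i <= i.
  rewrite -lee_fin -Hi.
  have -> : (2 * i)%:E = (\int[m]_(x in D) (cst (2 * i / M)%:E) x)%E.
    by rewrite integral_cst // mDM -EFinM divfK // gt_eqF.
  apply: ge0_le_integral => //.
  - by move=> x _ /=; rewrite lee_fin divr_ge0 ?mulr_ge0 // ltW.
  - by apply/measurable_EFinP.
  - move=> x Dx /=; rewrite lee_fin ler_pdivrMr //; exact: ltW (H' x Dx).
have i00 : i = 0 by lra.
have : (\int[m]_(x in D) `|(f x)%:E| = 0)%E.
  rewrite (_ : 0%E = i%:E); last by rewrite i00.
  rewrite -Hi; apply: eq_integral => x _; rewrite gee0_abs // lee_fin; exact: f0.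
move/ae_eq_integral_abs => /(_ mD).
case; first by apply/measurable_EFinP.
move=> N [mN mN0 sN].
have : (m D <= m N)%E.
  apply: le_measure; rewrite ?inE //.
  move=> x Dx; apply: sN => /=; move=> /(_ Dx) [] fx0.
  by have := H' x Dx; rewrite fx0 i00 mul0r mulr0 ltxx.
by rewrite mN0 mDM lee_fin leNgt M0.
Qed.

Context (dist : X -> X -> R) (hm : is_metric dist)
  (mb : forall x r, measurable (mball dist x r)) (D A : R) (D0 : 0 < D) (A1 : 1 <= A)
  (hA : forall x r, 0 <= r -> ((A^-1 * r `^ D)%:E <= m (mball dist x r))%E /\
      (m (mball dist x r) <= (A * r `^ D)%:E)%E).

Lemma d_ge0 x y : 0 <= dist x y. Proof. by case: hm. Qed.
Lemma d_xx x : dist x x = 0. Proof. by case: hm => _ h _ _; apply/h. Qed.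
Lemma d_sym x y : dist x y = dist y x. Proof. by case: hm. Qed.
Lemma d_tri x y z : dist x z <= dist x y + dist y z. Proof. by case: hm. Qed.

Definition Ucup (r : R) (s : seq X) := foldr (fun y U => mball dist y r `|` U) set0 s.

Lemma Ucup_mem r s w : Ucup r s w -> exists2 y, y \in s & mball dist y r w.
Proof.
elim: s => [//|y s IH] /= [h|/IH [y' ys h]]; first by exists y; rewrite ?mem_head.
by exists y'; rewrite // in_cons ys orbT.
Qed.

Lemma Ucup_meas r s : measurable (Ucup r s).
Proof. elim: s => [|y s IH] /=; first exact: measurable0. by apply: measurableU; [exact: mb|exact: IH]. Qed.

Lemma Ucup_ge r s : 0 < r -> uniq s ->
  (forall y y', y \in s -> y' \in s -> y != y' -> 2 * r <= dist y y') ->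
  (((size s)%:R * (A^-1 * r `^ D))%:E <= m (Ucup r s))%E.
Proof.
move=> r0; elim: s => [|y s IH] /=; first by rewrite mul0r measure0.
case/andP=> ys us sep.
rewrite measureU //; last first.
- rewrite -subset0 => w [/= h1 /Ucup_mem [y' y's h2]].
  have yy' : y != y' by apply: contraNneq ys => ->.
  have y's' : y' \in y :: s by rewrite in_cons y's orbT.
  have := sep y y' (mem_head _ _) y's' yy'.
  have := d_tri y w y'; rewrite /mball /= in h1 h2; rewrite (d_sym w y') => h3 h4.
  lra.
- exact: Ucup_meas.
rewrite -natr1 mulrDl mul1r EFinD addeC.
apply: leeD; first by case: (hA y r (ltW r0)).
apply: IH => // a b ha hb; apply: sep; by rewrite in_cons ?ha ?hb orbT.
Qed.

Lemma count_bound (s : seq X) (r Rr : R) (x0 : X) : 0 < r -> uniq s ->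
  (forall y y', y \in s -> y' \in s -> y != y' -> 2 * r <= dist y y') ->
  (forall y, y \in s -> mball dist y r `<=` mball dist x0 Rr) ->
  (size s)%:R * (A^-1 * r `^ D) <= A * Rr `^ D.
Proof.
move=> r0 us sep sub.
case: s us sep sub => [|y s] us sep sub.
  rewrite /= mul0r; apply: mulr_ge0; [exact: le_trans ler01 A1|exact: powR_ge0].
have Rr0 : 0 <= Rr.
  have := sub y (mem_head _ _) y; rewrite /mball /= d_xx => /(_ r0).
  have := d_ge0 x0 y; lra.
rewrite -lee_fin.
have h1 := @Ucup_ge r (y::s) r0 us sep.
have h2 := proj2 (hA x0 Rr Rr0).
have h3 : (m (Ucup r (y::s)) <= m (mball dist x0 Rr))%E.
  apply: le_measure; rewrite ?inE //; first exact: Ucup_meas.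
  move=> w /Ucup_mem [y' y's h]; exact: sub y's w h.
exact: le_trans h1 (le_trans h3 h2).
Qed.


Lemma count_bound2 (s : seq X) (r K : R) (x0 : X) : 0 < r -> 0 <= K -> uniq s ->
  (forall y y', y \in s -> y' \in s -> y != y' -> 2 * r <= dist y y') ->
  (forall y, y \in s -> mball dist y r `<=` mball dist x0 (K * r)) ->
  (size s)%:R <= A ^+ 2 * K `^ D.
Proof.
move=> r0 K0 us sep sub.
have h := @count_bound s r (K * r) x0 r0 us sep sub.
rewrite powRM // in h; last exact: ltW.
have p0 : 0 < r `^ D by exact: powR_gt0.
have A0 : 0 < A by exact: lt_le_trans ltr01 A1.
set n := (size s)%:R in h *; set p := r `^ D in h p0 *; set k := K `^ D in h *.
rewrite -(ler_pM2r p0).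
have e : n * p = A * (n * (A^-1 * p)) by field; rewrite gt_eqF.
rewrite e expr2 -!mulrA ler_pM2l //.
Qed.

Lemma sum_indic (S : seq X) (E : X -> set X) (x : X) :
  \sum_(y <- S) (\1_(E y) x : R) = (size [seq y <- S | `[< E y x >]])%:R.
Proof.
elim: S => [|y S IH]; first by rewrite big_nil.
rewrite big_cons /= IH indicE.
case: (pselect (E y x)) => h.
  rewrite mem_set ?asboolT /=; [by rewrite -[RHS]natr1 addrC|exact: h|exact: h].

by rewrite memNset ?asboolF /=; [rewrite add0r|exact: h|exact: h].
Qed.


Definition Pgood (o : X) (t e : R) (S : seq X) :=
  [/\ uniq S, (forall y, y \in S -> t * (1 + dist o y) <= 2^-1) &
    (forall y y', y \in S -> y' \in S -> y != y' -> e * t * (1 + dist o y) <= dist y y')].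

Definition Pcov (o : X) (t e : R) (S : seq X) :=
  forall z, t * (1 + dist o z) <= 2^-1 ->
    exists2 y, y \in S & dist z y < 2 * e * t * (1 + dist o y).

Lemma good_bound (o : X) (t e : R) : 0 < t -> t <= 2^-1 -> 0 < e -> e <= 8^-1 ->
  exists N : nat, forall S, Pgood o t e S -> (size S <= N)%N.
Proof.
move=> t0 t2 e0 e8.
set K := 2 / (e * t ^+ 2); set r := e * t / 2.
have K0 : 0 <= K by rewrite /K divr_ge0 // ltW // mulr_gt0 // exprn_gt0.
have r0 : 0 < r by rewrite /r divr_gt0 // mulr_gt0.
have Kr : K * r = t^-1 by rewrite /K /r; field; rewrite ?gt_eqF // ?mulf_neq0 // gt_eqF.
exists (Num.Def.archi_bound (A ^+ 2 * K `^ D)) => S [uS regS sepS].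
have h : (size S)%:R <= A ^+ 2 * K `^ D.
  apply: (@count_bound2 S r K o r0 K0 uS).
  - move=> y y' ys y's yy'; have := sepS y y' ys y's yy'.
    have := d_ge0 o y; rewrite /r => h1 h2.
    have -> : 2 * (e * t / 2) = e * t by field.
    have et0 : 0 <= e * t by rewrite mulr_ge0 // ltW.
    have := mulr_ge0 et0 h1; lra.
  - move=> y ys w; rewrite /mball /= Kr => hw.
    have := regS y ys; have := d_tri o y w; have := d_ge0 o y; have := d_ge0 y w.
    move: hw; rewrite /r => hw h1 h2 h3 h4.
    have hw' : dist y w < 32^-1 by nra.
    have : t * dist o w < 1 by nra.
    move=> hh; rewrite -(ltr_pM2l t0) mulfV ?gt_eqF //.
have := archi_boundP (mulr_ge0 (exprn_ge0 2 (le_trans ler01 A1)) (powR_ge0 K D)).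
move=> h2; have := le_lt_trans h h2; rewrite ltr_nat; exact: ltnW.
Qed.


Lemma good_ext (o : X) (t e : R) (S : seq X) : 0 < t -> t <= 2^-1 -> 0 < e -> e <= 8^-1 ->
  Pgood o t e S -> ~ Pcov o t e S -> exists z, Pgood o t e (z :: S).
Proof.
move=> t0 t2 e0 e8 [uS regS sepS] ncov.
have [z [zr zf]] : exists z, t * (1 + dist o z) <= 2^-1 /\
    forall y, y \in S -> 2 * e * t * (1 + dist o y) <= dist z y.
  apply: contrapT => hn; apply: ncov => z zr.
  apply: contrapT => hz; apply: hn; exists z; split => // y ys.
  rewrite leNgt; apply/negP => hlt; apply: hz; by exists y.
have et0 : 0 < e * t by rewrite mulr_gt0.
have et16 : e * t <= 16^-1 by nra.
exists z; split.
- rewrite /= uS andbT; apply/negP => zs; have := zf z zs; rewrite d_xx.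
  have := d_ge0 o z => h1 h2.
  have : 0 < 2 * e * t * (1 + dist o z) by rewrite -mulrA mulr_gt0 // mulr_gt0 //; lra.
  lra.
- by move=> y; rewrite in_cons => /predU1P [->|]; [|exact: regS].
- move=> y y'; rewrite !in_cons => /predU1P [->|ys] /predU1P [->|y's] yy'.
  + by rewrite eqxx in yy'.
  + have h := zf y' y's; have := d_tri o y' z; rewrite (d_sym y' z) => h2.
    have := d_ge0 o y'; have := d_ge0 z y' => h3 h4.
    have : e * t * (1 + dist o z) <= e * t * (1 + dist o y' + dist z y').
      rewrite ler_pM2l //; lra.
    move=> h5; have := ler_wpM2r h3 et16.
    nra.
  + have h := zf y ys; rewrite (d_sym y z).
    have := d_ge0 o y => h1.
    have := mulr_ge0 (ltW et0) h1; nra.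
  + exact: sepS.
Qed.


Lemma cover_exists (o : X) (t e : R) : 0 < t -> t <= 2^-1 -> 0 < e -> e <= 8^-1 ->
  exists S, Pgood o t e S /\ Pcov o t e S.
Proof.
move=> t0 t2 e0 e8.
have [N HN] := @good_bound o t e t0 t2 e0 e8.
suff: forall k S, Pgood o t e S -> (N - size S <= k)%N -> exists S, Pgood o t e S /\ Pcov o t e S.
  move=> H; apply: (H N [::]); last by rewrite leq_subr.
  by split; [by []|by move=> y0; rewrite in_nil|by move=> y0 y1; rewrite in_nil].
elim=> [|k IH] S PS hk.
  case: (pselect (Pcov o t e S)) => [c|nc]; first by exists S.
  have [z Pz] := @good_ext o t e S t0 t2 e0 e8 PS nc.
  have := HN _ Pz; have := HN _ PS => /= h1 h2.
  lia.
case: (pselect (Pcov o t e S)) => [c|nc]; first by exists S.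
have [z Pz] := @good_ext o t e S t0 t2 e0 e8 PS nc.
apply: (IH _ Pz) => /=; lia.
Qed.


Lemma ball_fin x r : 0 <= r -> exists M, [/\ m (mball dist x r) = M%:E,
  A^-1 * r `^ D <= M & M <= A * r `^ D].
Proof.
move=> r0; have [h1 h2] := hA x r r0.
move: h1 h2; case: (m (mball dist x r)) => [M| |] h1 h2 //; by exists M.
Qed.

Lemma A_gt0 : 0 < A. Proof. exact: lt_le_trans ltr01 A1. Qed.

Lemma g_point (o : X) (t e C : R) (g : X -> R) : 0 < t -> t <= 2^-1 -> 0 < e -> e <= 8^-1 ->
  measurable_fun setT g -> (forall x, 0 <= g x) -> 2 * A ^+ 2 * (2 / e) `^ D <= C ->
  forall y, exists x, dist y x < e * t * (1 + dist o y) /\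
   ((g x)%:E <= (C / fine (m (mball dist x (t * (1 + dist o x)))))%:E *
      \int[m]_(w in mball dist x (t * (1 + dist o x))) (g w)%:E)%E.
Proof.
move=> t0 t2 e0 e8 mg g0 hC y.
have A0 := A_gt0.
set rho := e * t * (1 + dist o y).
have dy0 := d_ge0 o y.
have rho0 : 0 < rho by rewrite /rho mulr_gt0 ?mulr_gt0 //; lra.
have [My [mBy hMy1 hMy2]] := ball_fin y rho (ltW rho0).
have My0 : 0 < My.
  apply: lt_le_trans hMy1; rewrite mulr_gt0 ?invr_gt0 //; exact: powR_gt0.
have Cpos : 0 < C.
  apply: lt_le_trans hC; rewrite mulr_gt0 ?mulr_gt0 ?exprn_gt0 //; apply: powR_gt0.
  by rewrite divr_gt0.
have mgE : forall B, measurable B -> measurable_fun B (fun w => (g w)%:E).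
  move=> B mB; apply/measurable_EFinP; exact: measurable_funS mg.
have key : forall x, dist y x < rho ->
   let rx := t * (1 + dist o x) in
   [/\ mball dist y rho `<=` mball dist x rx, 0 < rx &
     exists Mx, [/\ m (mball dist x rx) = Mx%:E, 0 < Mx & 2 * Mx <= C * My]].
  move=> x hx rx.
  have et16 : e * t <= 16^-1 by nra.
  have et0 : 0 < e * t by rewrite mulr_gt0.
  have hxy := d_tri o y x; have hyx := d_tri o x y; rewrite (d_sym x y) in hyx.
  have dx0 := d_ge0 o x; have dyx0 := d_ge0 y x.
  have hr1 : rx <= (2 / e) * rho.
    rewrite /rx /rho.
    have -> : 2 / e * (e * t * (1 + dist o y)) = 2 * t * (1 + dist o y) by field; rewrite gt_eqF.
    have := mulr_ge0 (ltW et0) dy0; rewrite /rho in hx; nra.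
  have rx0 : 0 < rx by rewrite /rx mulr_gt0 //; lra.
  split => //.
  - move=> w; rewrite /mball /= => hw.
    have := d_tri x y w; rewrite (d_sym x y) => h.
    rewrite /rho in hx hw; rewrite /rx.
    have := mulr_ge0 (ltW et0) dy0; have := mulr_ge0 (ltW et0) dx0; nra.
  - have [Mx [mBx hMx1 hMx2]] := ball_fin x rx (ltW rx0).
    exists Mx; split => //.
      apply: lt_le_trans hMx1; rewrite mulr_gt0 ?invr_gt0 //; exact: powR_gt0.
    have e2 : 0 <= 2 / e by rewrite divr_ge0 // ltW.
    have hp : rx `^ D <= (2 / e) `^ D * rho `^ D.
      rewrite -powRM //; last exact: ltW.
      apply: ge0_ler_powR; rewrite ?nnegrE //; [exact: ltW|exact: ltW|].
      by rewrite mulr_ge0 // ltW.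
    have hp2 : A * rx `^ D <= A ^+ 2 * (2 / e) `^ D * (A^-1 * rho `^ D).
      have -> : A ^+ 2 * (2 / e) `^ D * (A^-1 * rho `^ D) = A * ((2 / e) `^ D * rho `^ D).
        by field; rewrite gt_eqF.
      by rewrite ler_pM2l.
    have q0 : 0 <= A ^+ 2 * (2 / e) `^ D by rewrite mulr_ge0 ?exprn_ge0 ?powR_ge0 // ltW.
    have := ler_wpM2l q0 hMy1.
    have := ler_wpM2r (ltW My0) hC.
    lra.
have [[iy Hiy iy0]|Hiy] : (exists2 iy : R, (\int[m]_(w in mball dist y rho) (g w)%:E)%E = iy%:E & 0 <= iy) \/
   (\int[m]_(w in mball dist y rho) (g w)%:E = +oo)%E.
  have : (0 <= \int[m]_(w in mball dist y rho) (g w)%:E)%E.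
    by apply: integral_ge0 => w _; rewrite lee_fin.
  case: (\int[m]_(w in mball dist y rho) (g w)%:E)%E => [r| |] //= h; [left; exists r|right] => //.
- have mBy0 : (0 < m (mball dist y rho))%E by rewrite mBy lte_fin.
  have mByoo : (m (mball dist y rho) < +oo)%E by rewrite mBy ltry.
  have [x Bx gx] := @exists_small (mball dist y rho) (mb y rho) g (measurable_funS measurableT (@subsetT _ _) mg) g0 mBy0 mByoo iy Hiy.
  rewrite mBy /= in gx.
  exists x; split => //.
  have [sub rx0 [Mx [mBx Mx0 hM]]] := key x Bx.
  rewrite mBx /=.
  have Ix : (iy%:E <= \int[m]_(w in mball dist x (t * (1 + dist o x))) (g w)%:E)%E.
    rewrite -Hiy; apply: ge0_subset_integral; [exact: mb|exact: mb|exact: mgE _ (mb _ _)| |exact: sub].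
    by move=> w _; rewrite lee_fin.
  have c0 : (0 <= (C / Mx)%:E)%E by rewrite lee_fin divr_ge0 // ltW.
  apply: le_trans (lee_wpmul2l c0 Ix); rewrite -EFinM lee_fin.
  rewrite mulrAC ler_pdivlMr //.
  rewrite -(ler_pM2r My0).
  have := ler_wpM2r (ltW Mx0) gx; have := ler_wpM2l iy0 hM; nra.
- exists y; split; first by rewrite d_xx.
  have [sub rx0 [Mx [mBx Mx0 hM]]] := key y ltac:(by rewrite d_xx).
  rewrite mBx /=.
  have Ix : (+oo <= \int[m]_(w in mball dist y (t * (1 + dist o y))) (g w)%:E)%E.
    rewrite -Hiy; apply: ge0_subset_integral; [exact: mb|exact: mb|exact: mgE _ (mb _ _)| |exact: sub].
    by move=> w _; rewrite lee_fin.
  move: Ix; rewrite leye_eq => /eqP ->.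
  by rewrite gt0_muley ?leey // lte_fin divr_gt0.
Qed.


Lemma arith_near (t e u v w p q dxy : R) : 0 < t -> t <= 2^-1 -> 0 < e -> e <= 8^-1 ->
  0 <= u -> 0 <= v -> 0 <= w -> 0 <= p -> 0 <= q ->
  p < e * t * (1 + v) -> q < t * (1 + w) -> t * (1 + v) <= 2^-1 ->
  w <= u + q -> v <= w + p -> u <= w + q -> w <= v + p -> dxy <= q + p ->
  1 + u <= 2 * (1 + v) /\ dxy < 3 * (t * (1 + u)).
Proof.
move=> t0 t2 e0 e8 u0 v0 w0 p0 q0 hp hq hv hw hv2 hu hw2 hd.
have et16 : e * t <= 16^-1 by nra.
have Tv0 : 0 <= t * (1 + v) by rewrite mulr_ge0 //; lra.
have hp' : p <= 8^-1 * (t * (1 + v)).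
  have := ler_wpM2r Tv0 e8; rewrite mulrA; lra.
have hw1 : t * (1 + w) <= 2^-1 * (1 + w) by apply: ler_wpM2r => //; lra.
have hv1 : t * (1 + v) <= 2^-1 * (1 + v) by apply: ler_wpM2r => //; lra.
have htq : t * q <= 2^-1 * q by apply: ler_wpM2r.
have htp : t * p <= 2^-1 * p by apply: ler_wpM2r.
have hTw : t * (1 + w) <= t * (1 + u) + t * q.
  have h1 : 1 + w <= (1 + u) + q by lra.
  have h2 := ler_wpM2l (ltW t0) h1; rewrite !mulrDr in h2 *; lra.
have hTv : t * (1 + v) <= t * (1 + w) + t * p.
  have h1 : 1 + v <= (1 + w) + p by lra.
  have h2 := ler_wpM2l (ltW t0) h1; rewrite !mulrDr in h2 *; lra.
split; lra.
Qed.


Lemma arith_cov (t e a v w p c dfx : R) : 0 < t -> t <= 2^-1 -> 0 < e -> e <= 8^-1 ->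
  8 * e = a -> 0 <= v -> 0 <= w -> 0 <= p -> 0 <= c ->
  p < e * t * (1 + v) -> c < 2 * e * t * (1 + v) -> dfx <= p + c -> v <= w + p ->
  dfx < a * t * (1 + w).
Proof.
move=> t0 t2 e0 e8 ea v0 w0 p0 c0 hp hc hd hv.
have Tv0 : 0 <= t * (1 + v) by rewrite mulr_ge0 //; lra.
have hp' : p <= 8^-1 * (t * (1 + v)).
  have := ler_wpM2r Tv0 e8; rewrite mulrA; lra.
have htp : t * p <= 2^-1 * p by apply: ler_wpM2r.
have hTv : t * (1 + v) <= t * (1 + w) + t * p.
  have h1 : 1 + v <= (1 + w) + p by lra.
  have h2 := ler_wpM2l (ltW t0) h1; rewrite !mulrDr in h2 *; lra.
have h3 : t * (1 + v) <= (16 / 15) * (t * (1 + w)) by lra.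
have h4 := ler_wpM2l (ltW e0) h3.
rewrite -ea; rewrite -!mulrA in hp hc h4 *; rewrite mulrCA in h4; lra.
Qed.

End S.

Theorem mainTheorem7 (R : realType) (dsp : measure_display) (X : measurableType dsp)
  (dist : X -> X -> R) (m : {measure set X -> \bar R}) (D : R) (o : X) :
  is_metric dist ->
  (forall x r, measurable (mball dist x r)) ->
  0 < D ->
  ahlfors_regular dist m D ->
  let dd := fun x : X => 1 + dist o x in
  forall a : R, 0 < a -> a <= 1 ->
  exists2 C : R, 0 < C &
    forall t : R, 0 < t -> t <= 2^-1 ->
    forall g : X -> R, (forall x, 0 <= g x) -> loc_integrable dist m g ->
    exists s : seq X,
      [/\ forall xj, xj \in s -> t * dd xj <= 1,
          forall x : X, \sum_(xj <- s) (\1_(mball dist xj (t * dd xj)) x : R) <= C,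
          forall x : X, t * dd x <= 2^-1 ->
            1 <= \sum_(xj <- s) (\1_(mball dist xj (a * t * dd xj)) x : R) &
          forall xj, xj \in s ->
            ((g xj)%:E <= (C / fine (m (mball dist xj (t * dd xj))))%:E *
               \int[m]_(y in mball dist xj (t * dd xj)) (g y)%:E)%E].
Proof.
move=> hm mb D0 [A [A1 hA]] dd a a0 a1.
have dtri := @d_tri R dsp X dist hm.
have dge0 := @d_ge0 R dsp X dist hm.
have dsym := @d_sym R dsp X dist hm.
set e := a / 8.
have e0 : 0 < e by rewrite /e divr_gt0.
have e8 : e <= 8^-1 by rewrite /e; lra.
have ea : 8 * e = a by rewrite /e; field.
have A0 : 0 < A by exact: lt_le_trans ltr01 A1.
set C1 := A ^+ 2 * (16 / e) `^ D.
set C2 := 2 * A ^+ 2 * (2 / e) `^ D.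
have C10 : 0 < C1 by rewrite /C1 mulr_gt0 ?exprn_gt0 // powR_gt0 // divr_gt0.
have C20 : 0 < C2 by rewrite /C2 !mulr_gt0 ?exprn_gt0 // powR_gt0 // divr_gt0.
exists (C1 + C2); first by lra.
move=> t t0 t2 g g0 [mg _].
have [S [[uS regS sepS] covS]] := @cover_exists R dsp X m dist hm mb D A D0 A1 hA o t e t0 t2 e0 e8.
have hC : C2 <= C1 + C2 by lra.
have [f hf] := choice (@g_point R dsp X m dist hm mb D A D0 A1 hA o t e (C1 + C2) g t0 t2 e0 e8 mg g0 hC).
exists (map f S); split.
- move=> xj /mapP [y ys ->]; rewrite /dd.
  have hp := proj1 (hf y); have hr := regS y ys.
  have htri := dtri o y (f y); have p0 := dge0 y (f y); have v0 := dge0 o y.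
  have Tv0 : 0 <= t * (1 + dist o y) by rewrite mulr_ge0 //; lra.
  have h1 := ler_pM (ltW e0) Tv0 e8 hr; rewrite mulrA in h1.
  have htp : t * dist y (f y) <= 2^-1 * dist y (f y) by apply: ler_wpM2r.
  have h2 : 1 + dist o (f y) <= (1 + dist o y) + dist y (f y) by lra.
  have h3 := ler_wpM2l (ltW t0) h2; rewrite !mulrDr in h3 *; rewrite mulrDr in Tv0 hr.
  lra.
- move=> x; rewrite big_map.
  rewrite (@sum_indic R dsp X S (fun y => mball dist (f y) (t * dd (f y))) x).
  set S' := [seq y <- S | _].
  have near : forall y, y \in S' -> y \in S /\
      1 + dist o x <= 2 * (1 + dist o y) /\ dist x y < 3 * (t * (1 + dist o x)).
    move=> y; rewrite mem_filter => /andP [/asboolP hy ys]; split => //.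
    move: hy; rewrite /mball /dd /= => hy.
    have hw : dist o (f y) <= dist o x + dist (f y) x.
      by rewrite (dsym (f y) x); exact: dtri.
    have hv2 : dist o y <= dist o (f y) + dist y (f y).
      by rewrite (dsym y (f y)); exact: dtri.
    have hu : dist o x <= dist o (f y) + dist (f y) x by exact: dtri.
    have hw2 : dist o (f y) <= dist o y + dist y (f y) by exact: dtri.
    have hd : dist x y <= dist (f y) x + dist y (f y).
      by rewrite (dsym (f y) x) (dsym y (f y)); exact: dtri.
    exact: (@arith_near R t e (dist o x) (dist o y) (dist o (f y)) (dist y (f y))
      (dist (f y) x) (dist x y) t0 t2 e0 e8 (dge0 _ _) (dge0 _ _) (dge0 _ _) (dge0 _ _)
      (dge0 _ _) (proj1 (hf y)) hy (regS y ys) hw hv2 hu hw2 hd).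
  have u0 := dge0 o x.
  have et0 : 0 <= e * t by rewrite mulr_ge0 // ltW.
  have : (size S')%:R <= C1; last by lra.
  apply: (@count_bound2 R dsp X m dist hm mb D A A1 hA S' (e * t * dd x / 4) (16 / e) x).
  + rewrite /dd divr_gt0 // mulr_gt0 ?mulr_gt0 //; lra.
  + by rewrite divr_ge0 // ltW.
  + exact: filter_uniq.
  + move=> y y' hy hy' yy'.
    have [ys [h1 _]] := near y hy; have [y's _] := near y' hy'.
    have := sepS y y' ys y's yy'.
    have h2 := ler_wpM2l et0 h1; rewrite mulrCA in h2.
    rewrite /dd; lra.
  + move=> y hy w; rewrite /mball /dd /= => hw.
    have [ys [_ h1]] := near y hy.
    have := dtri x y w.
    have -> : 16 / e * (e * t * (1 + dist o x) / 4) = 4 * (t * (1 + dist o x)).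
      by field; rewrite gt_eqF.
    have Tu0 : 0 <= t * (1 + dist o x) by rewrite mulr_ge0 //; lra.
    have h3 := ler_wpM2r Tu0 e8.
    rewrite -mulrA in hw; lra.
- move=> x hx; rewrite big_map.
  rewrite (@sum_indic R dsp X S (fun y => mball dist (f y) (a * t * dd (f y))) x).
  have [y ys hy] := covS x hx.
  have yin : y \in [seq y <- S | `[< mball dist (f y) (a * t * dd (f y)) x >]].
    rewrite mem_filter ys andbT; apply/asboolP; rewrite /mball /dd /=.
    have hd : dist (f y) x <= dist y (f y) + dist x y.
      by rewrite (dsym x y) (dsym y (f y)); exact: dtri.
    have hv : dist o y <= dist o (f y) + dist y (f y).
      by rewrite (dsym y (f y)); exact: dtri.
    exact: (@arith_cov R t e a (dist o y) (dist o (f y)) (dist y (f y)) (dist x y)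
      (dist (f y) x) t0 t2 e0 e8 ea (dge0 _ _) (dge0 _ _) (dge0 _ _) (dge0 _ _)
      (proj1 (hf y)) hy hd hv).
  move: yin; case: [seq _ <- S | _] => // z s' _ /=.
  rewrite -natr1; have := ler0n R (size s'); lra.
- by move=> xj /mapP [y ys ->]; exact: (proj2 (hf y)).
Qed.
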